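(* Let $C$ be a $2\times N$ real matrix with non-negative entries and let $1\le p\le2$. If $C_{ij}=0$ for some entry, then $(C^{[p-1]})_{ij}\le0$.
   Context: For a real or complex matrix $C$ and real $r$, the $r$-th polar power is $C^{[r]}:=(CC^* )^{(r-1)/2}C$ (here $C^*=C^T$). For $p<2$ the exponent $(p-2)/2$ is negative; if $CC^T$ is singular, powers of the positive semidefinite matrix $CC^T$ are taken on its support (i.e. via its spectral decomposition, using only the nonzero eigenvalues), equivalently $C^{[r]}=|C^*|^{r-1}U$ where $C=U|C|$ is the polar decomposition. *)

(* Defs.v *)
From HB Require Import structures.
From mathcomp Require Import all_boot all_order all_algebra.
From mathcomp Require Import classical_sets boolp reals exp.
Set Implicit Arguments. Unset Strict Implicit. Unset Printing Implicit Defensive.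
Import Order.TTheory GRing.Theory Num.Theory.
Local Open Scope ring_scope.

(* T is "S^s taken on the support of S" computed from an orthogonal
   diagonalization S = Q diag(d) Q^T: T = Q diag(d_i^s if d_i > 0, else 0) Q^T. *)
Definition is_spec_pow (R : realType) (n : nat) (S : 'M[R]_n) (s : R)
    (T : 'M[R]_n) : Prop :=
  exists (Q : 'M[R]_n) (d : 'rV[R]_n),
    Q^T *m Q = 1%:M /\
    S = Q *m diag_mx d *m Q^T /\
    T = Q *m diag_mx (\row_i (if 0 < d 0 i then powR (d 0 i) s else 0)) *m Q^T.

Definition mx_spec_pow (R : realType) (n : nat) (S : 'M[R]_n) (s : R) : 'M[R]_n :=
  xget 0 (is_spec_pow S s).

Definition polar_pow (R : realType) (m n : nat) (C : 'M[R]_(m, n)) (r : R)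
    : 'M[R]_(m, n) :=
  mx_spec_pow (C *m C^T) ((r - 1) / 2) *m C.

(* Main.v *)
Require Import Defs.
From HB Require Import structures.
From mathcomp Require Import all_boot all_order all_algebra.
From mathcomp Require Import classical_sets boolp reals exp.
From mathcomp Require Import ring lra.
Import Order.TTheory GRing.Theory Num.Theory.
Local Open Scope ring_scope.
Lemma powR_anti {R : realType} (s x y : R) :
  s <= 0 -> 0 < x -> x <= y -> y `^ s <= x `^ s.
Proof.
move=> s0 x0 xy.
have y0 : 0 < y by apply: lt_le_trans xy.
have E : forall z : R, z `^ s = (z `^ (- s))^-1 by move=> z; rewrite -powRN opprK.
rewrite !E lef_pV2 ?posrE ?powR_gt0 //.
apply: (ge0_ler_powR (r := - s)) => //; first by rewrite oppr_ge0.
- by rewrite nnegrE ltW.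
- by rewrite nnegrE ltW.
Qed.

Lemma keyA (R : realType) (a0 a1 b0 b1 d0 d1 s : R) : s <= 0 -> 0 < d0 -> 0 < d1 ->
  a0 * b0 + a1 * b1 = 0 -> 0 <= a0 * d0 * b0 + a1 * d1 * b1 ->
  a0 * (d0 `^ s) * b0 + a1 * (d1 `^ s) * b1 <= 0.
Proof.
move=> s0 h0 h1 o hb.
have e1 : a1 * b1 = - (a0 * b0) by lra.
have E : forall x y, a0 * x * b0 + a1 * y * b1 = (a0 * b0) * (x - y).
  by move=> x y; rewrite -[a0 * x * b0]mulrA [x * b0]mulrC mulrA -[a1 * y * b1]mulrA [y * b1]mulrC mulrA e1; ring.
move: hb; rewrite !E => hb.
set w := a0 * b0 in hb *.
have [w0|w0|w0] := ltgtP w 0.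
- have : d0 <= d1.
    rewrite -subr_le0; rewrite -(ler_nM2l w0) mulr0; lra.
  move=> /(powR_anti _ _ _ s0 h0) => g; apply: mulr_le0_ge0; first exact: ltW.
  by rewrite subr_ge0.
- have : d1 <= d0.
    rewrite -subr_ge0; rewrite -(pmulr_rge0 _ w0); lra.
  move=> /(powR_anti _ _ _ s0 h1) => g; apply: mulr_ge0_le0; first exact: ltW.
  by rewrite subr_le0.
- by rewrite w0 mul0r.
Qed.

Lemma sum2 (R : realType) (i : 'I_2) : exists i' : 'I_2, i != i' /\
  forall F : 'I_2 -> R, \sum_l F l = F i + F i'.
Proof.
have E : forall F : 'I_2 -> R, \sum_l F l = F ord0 + F ord_max.
  move=> F; rewrite !big_ord_recl big_ord0 addr0; congr (_ + F _); exact: val_inj.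
case: i => [[|[|n]] Hi] //.
- exists ord_max; split => //; move=> F; rewrite E; congr (F _ + _); exact: val_inj.
- exists ord0; split => //; move=> F; rewrite E addrC; congr (F _ + _); exact: val_inj.
Qed.

Lemma sum2' (R : realType) (F : 'I_2 -> R) : \sum_l F l = F ord0 + F ord_max.
Proof. rewrite !big_ord_recl big_ord0 addr0; congr (_ + F _); exact: val_inj. Qed.
Theorem mainTheorem11 (R : realType) (N : nat) (C : 'M[R]_(2, N)) (p : R) :
  (forall i j, 0 <= C i j) -> 1 <= p -> p <= 2 ->
  forall (i : 'I_2) (j : 'I_N), C i j = 0 -> polar_pow C (p - 1) i j <= 0.
Proof.
move=> C0 p1 p2 i j Cij.
rewrite /polar_pow /mx_spec_pow.
set s := (p - 1 - 1) / 2.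
have s0 : s <= 0 by rewrite /s; lra.
case: xgetP => [T _ [Q [d [hQ [hS hT]]]] | _]; last by rewrite mul0mx mxE.
have hQ' : Q *m Q^T = 1%:M := mulmx1C hQ.
set D := Q^T *m C.
have hdiag : diag_mx d = D *m D^T.
  have -> : D *m D^T = Q^T *m (C *m C^T) *m Q by rewrite trmx_mul trmxK !mulmxA.
  by rewrite hS !mulmxA hQ mul1mx -mulmxA hQ mulmx1.
have hd : forall k, d 0 k = \sum_m D k m ^+ 2.
  move=> k; have := congr1 (fun M : 'M[R]_2 => M k k) hdiag; rewrite !mxE eqxx mulr1n /= => ->.
  apply: eq_bigr => m _; rewrite expr2; congr (_ * _); exact: mxE.
have hD0 : forall k, ~ 0 < d 0 k -> forall m, D k m = 0.
  move=> k hk m; have d0 : d 0 k = 0.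
    apply/eqP; rewrite eq_le; apply/andP; split; last by rewrite hd sumr_ge0 // => l _; rewrite sqr_ge0.
    by rewrite leNgt; apply/negP.
  move: d0; rewrite hd => /psumr_eq0P H; apply/eqP; rewrite -sqrf_eq0; apply/eqP.
  by apply: H => // l _; rewrite sqr_ge0.
have hC : C = Q *m D by rewrite /D mulmxA hQ' mul1mx.
set g := \row_i0 _ in hT.
have hTC : (T *m C) i j = \sum_k Q i k * g 0 k * D k j.
  rewrite hT -!mulmxA [_ *m D]mulmxA mxE.
  by apply: eq_bigr => k _; rewrite -mulmxA -/D mul_diag_mx mxE mulrA.
have hCij : C i j = \sum_k Q i k * D k j by rewrite hC mxE.
rewrite hTC.
have [/andP[h0 h1]|hn] := boolP ((0 < d 0 ord0) && (0 < d 0 ord_max)).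
- rewrite -hTC mxE; have [i' [ii' Hs]] := sum2 R i.
  rewrite Hs Cij mulr0 add0r; apply: mulr_le0_ge0; last exact: C0.
  have eT : T i i' = \sum_k Q i k * g 0 k * Q i' k.
    by rewrite hT mxE; apply: eq_bigr => k _; rewrite mul_mx_diag !mxE.
  have eO : \sum_k Q i k * Q i' k = 0.
    have := congr1 (fun M : 'M[R]_2 => M i i') hQ'; rewrite !mxE (negbTE ii') mulr0n => E.
    rewrite -[RHS]E; apply: eq_bigr => k _; congr (_ * _); exact/esym/mxE.
  have eS : 0 <= \sum_k Q i k * d 0 k * Q i' k.
    have := congr1 (fun M : 'M[R]_2 => M i i') hS; rewrite mxE => E.
    have -> : \sum_k Q i k * d 0 k * Q i' k = (Q *m diag_mx d *m Q^T) i i'.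
      by rewrite mxE; apply: eq_bigr => k _; rewrite mul_mx_diag !mxE.
    rewrite -hS mxE; apply: sumr_ge0 => m _; rewrite mxE; apply: mulr_ge0; exact: C0.
  rewrite eT sum2'; rewrite sum2' in eO eS; rewrite !mxE h0 h1.
  rewrite sum2' in eS; exact: keyA.
- rewrite sum2'; move: hCij; rewrite Cij sum2'.
  case: (boolP (0 < d 0 ord0)) hn => [h0|h0] /=.
    move=> h1 e.
    rewrite (hD0 _ (negP h1)) !mulr0 addr0 in e *.
    rewrite -mulrA [g 0 _ * _]mulrC mulrA -e mul0r; lra.
  move=> _ e; rewrite (hD0 _ (negP h0)) !mulr0 add0r in e *.
  rewrite -mulrA [g 0 _ * _]mulrC mulrA -e mul0r; lra.
Qed.
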